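(* Let $q\in(0,\tfrac12)$ and let $T\sim U(1,2)$, $S\sim U(-1,0)$ be independent. Let $p_3^{PD}$ be the probability that $$P_{T,S}(x)=(T+S-1)x^3+\big(1-T-2S+q(S-1-T)\big)x^2+\big(S+q(T-S)\big)x$$ has exactly three distinct roots in $[0,1]$. Then $$p_3^{PD}\leq \frac{q}{2(1-q)}.$$ In particular $p_3^{PD}\le \tfrac12$ for all $q\in(0,\tfrac12)$ and $p_3^{PD}\to 0$ as $q\to 0^+$. *)

(* Defs.v *)
From HB Require Import structures.
From mathcomp Require Import all_boot all_order all_algebra.
From mathcomp Require Import all_classical all_reals all_analysis.
Set Implicit Arguments. Unset Strict Implicit. Unset Printing Implicit Defensive.
Import Order.TTheory GRing.Theory Num.Theory.
Import numFieldNormedType.Exports.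
Local Open Scope classical_set_scope.
Local Open Scope ring_scope.

Definition P_TS {R : realType} (q t s x : R) : R :=
  (t + s - 1) * x ^+ 3
  + (1 - t - 2 * s + q * (s - 1 - t)) * x ^+ 2
  + (s + q * (t - s)) * x.

Definition three_roots_01 {R : realType} (q : R) (ts : R * R) : Prop :=
  exists x1 x2 x3 : R,
    [/\ x1 != x2, x1 != x3 & x2 != x3] /\
    [/\ 0 <= x1 <= 1, 0 <= x2 <= 1 & 0 <= x3 <= 1] /\
    [/\ P_TS q ts.1 ts.2 x1 = 0, P_TS q ts.1 ts.2 x2 = 0 & P_TS q ts.1 ts.2 x3 = 0] /\
    (forall x : R, 0 <= x <= 1 -> P_TS q ts.1 ts.2 x = 0 ->
       [\/ x = x1, x = x2 | x = x3]).

Lemma lt_1_2 {R : realType} : (1 : R) < 2.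
Proof. by rewrite ltr1n. Qed.

Lemma lt_m1_0 {R : realType} : (-1 : R) < 0.
Proof. by rewrite ltrN10. Qed.

Definition p3PD {R : realType} (q : R) : \bar R :=
  ((uniform_prob (@lt_1_2 R)) \x (uniform_prob (@lt_m1_0 R)))%E
    [set ts | three_roots_01 q ts].

(* Main.v *)
Require Import Defs.
From HB Require Import structures.
From mathcomp Require Import all_boot all_order all_algebra.
From mathcomp Require Import all_classical all_reals all_analysis.
From mathcomp Require Import ring lra measurable_realfun.
Import Order.TTheory GRing.Theory Num.Theory.
Import numFieldNormedType.Exports.
Local Open Scope classical_set_scope.
Local Open Scope ring_scope.
Lemma quad_key {R : realType} (q a b c r1 r2 : R) : 0 < q ->
  a + b + c = - q -> r1 != r2 -> 0 < r1 <= 1 -> 0 < r2 <= 1 ->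
  a * r1 ^+ 2 + b * r1 + c = 0 -> a * r2 ^+ 2 + b * r2 + c = 0 ->
  0 < c - a - q.
Proof.
move=> q0 e r12 /andP[r10 r11] /andP[r20 r21] h1 h2.
have hb : b = - a * (r1 + r2).
  have : (r1 - r2) * (a * (r1 + r2) + b) = 0.
    by rewrite -[RHS](subrr 0) -{1}h1 -h2; ring.
  move/eqP; rewrite mulf_eq0 subr_eq0 (negbTE r12) /= => /eqP H.
  by apply: (addrI (a * (r1 + r2))); rewrite H; ring.
have hc : c = a * r1 * r2.
  by apply: (addrI (a * r1 ^+ 2 + b * r1)); rewrite h1 hb; ring.
have ha : a * ((1 - r1) * (1 - r2)) = - q by rewrite -e hb hc; ring.
have r1n1 : r1 != 1.
  apply/eqP => E; move: ha; rewrite E subrr mul0r mulr0 => /eqP.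
  by rewrite eq_sym oppr_eq0 gt_eqF.
have r2n1 : r2 != 1.
  apply/eqP => E; move: ha; rewrite E subrr mulr0 mulr0 => /eqP.
  by rewrite eq_sym oppr_eq0 gt_eqF.
have r1l : r1 < 1 by rewrite lt_neqAle r1n1.
have r2l : r2 < 1 by rewrite lt_neqAle r2n1.
have pp : 0 < (1 - r1) * (1 - r2) by apply: mulr_gt0; rewrite subr_gt0.
have a0 : a < 0.
  by rewrite -(pmulr_llt0 _ pp) ha oppr_lt0.
have -> : c - a - q = (- a) * (r1 * (1 - r2) + r2 * (1 - r1)).
  by rewrite -ha hc; ring.
apply: mulr_gt0; first by rewrite oppr_gt0.
by apply: addr_gt0; apply: mulr_gt0 => //; rewrite subr_gt0.
Qed.

Lemma P_Q {R : realType} (q t s x : R) : P_TS q t s x =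
  x * ((t + s - 1) * x ^+ 2 + (1 - t - 2 * s + q * (s - 1 - t)) * x + (s + q * (t - s))).
Proof. rewrite /P_TS; ring. Qed.

Lemma root_Q {R : realType} (q t s x : R) : x != 0 -> P_TS q t s x = 0 ->
  (t + s - 1) * x ^+ 2 + (1 - t - 2 * s + q * (s - 1 - t)) * x + (s + q * (t - s)) = 0.
Proof. by move=> x0; rewrite P_Q => /eqP; rewrite mulf_eq0 (negbTE x0) /= => /eqP. Qed.

Lemma three_roots_key {R : realType} (q : R) (ts : R * R) : 0 < q ->
  three_roots_01 q ts -> (1 - q) * (ts.1 - 1) < - q * ts.2.
Proof.
case: ts => t s q0 [x1 [x2 [x3 [[n12 n13 n23] [[h1 h2 h3] [[p1 p2 p3] _]]]]]] /=.
move: p1 p2 p3 => /=  p1 p2 p3.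
suff H : forall r1 r2 : R, r1 != r2 -> r1 != 0 -> r2 != 0 -> 0 <= r1 <= 1 -> 0 <= r2 <= 1 ->
    P_TS q t s r1 = 0 -> P_TS q t s r2 = 0 -> (1 - q) * (t - 1) < - q * s.
  have [E1|E1] := eqVneq x1 0.
    apply: (H x2 x3) => //; [by rewrite -E1 eq_sym|by rewrite -E1 eq_sym].
  have [E2|E2] := eqVneq x2 0.
    by apply: (H x1 x3) => //; rewrite -E2 eq_sym.
  exact: (H x1 x2).
move=> r1 r2 r12 r10 r20 /andP[r1a r1b] /andP[r2a r2b] e1 e2.
have := @quad_key R q (t + s - 1) (1 - t - 2 * s + q * (s - 1 - t)) (s + q * (t - s)) r1 r2 q0.
move=> /(_ _ r12 _ _ (root_Q _ _ _ _ r10 e1) (root_Q _ _ _ _ r20 e2)).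
have -> : s + q * (t - s) - (t + s - 1) - q = - q * s - (1 - q) * (t - 1) by ring.
rewrite subr_gt0; apply.
- ring.
- by rewrite r1b andbT lt_neqAle eq_sym r10.
- by rewrite r2b andbT lt_neqAle eq_sym r20.
Qed.
Lemma ge0_le_integral_any d (T : measurableType d) (R : realType)
  (mu : {measure set T -> \bar R}) (D E : set T) (f g : T -> \bar R) :
  D `<=` E -> (forall x, D x -> (0 <= f x)%E) -> (forall x, E x -> (0 <= g x)%E) ->
  (forall x, D x -> (f x <= g x)%E) ->
  (\int[mu]_(x in D) f x <= \int[mu]_(x in E) g x)%E.
Proof.
move=> DE f0 g0 fg.
rewrite (ge0_integralE mu f0) (ge0_integralE mu g0) /=.
apply: ereal_sup_le => _ [h hf <-]; exists h => //= x.
apply: (le_trans (hf x)); rewrite /patch.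
case: ifPn => [/[!inE] Dx|_].
  by rewrite ifT ?inE ?fg //; exact: DE.
by case: ifPn => [/[!inE] /g0|//].
Qed.

Lemma uniform_prob_le {R : realType} (a b : R) (ab : a < b) (U V : set R) :
  U `<=` V -> (uniform_prob ab U <= uniform_prob ab V)%E.
Proof.
move=> UV; apply: ge0_le_integral_any => // x _; rewrite lee_fin uniform_pdf_ge0 //.
Qed.
Lemma ftc_lin {R : realType} (k : R) :
  (\int[lebesgue_measure]_(x in `[(-1)%R, 0%R]) (k * x)%:E = (- k / 2)%:E)%E.
Proof.
have cF : continuous (fun x : R => k / 2 * x ^+ 2).
  move=> x; apply: cvgM; [exact: cvg_cst|exact: exprn_continuous].
rewrite (@continuous_FTC2 _ _ (fun x => k / 2 * x ^+ 2)).
- by rewrite -EFinB; congr (_%:E); ring.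
- by rewrite ltrN10.
- apply: continuous_in_subspaceT => x _.
  apply: cvgM; [exact: cvg_cst|exact: cvg_id].
- split.
  + move=> x _; apply: derivableM => //; exact: exprn_derivable.
  + exact: cvg_at_right_filter (cF _).
  + exact: cvg_at_left_filter (cF _).
- move=> x _; rewrite derive1E deriveM//.
  rewrite derive_cst scaler0 addr0 exp_derive expr1 /GRing.scale /=.
  by field.
Qed.
Section S.
Variable R : realType.
Let m1 := uniform_prob (@lt_1_2 R).
Let m2 := uniform_prob (@lt_m1_0 R).
Variable q : R.
Let B := [set ts : R * R | (1 - q) * (ts.1 - 1) < - q * ts.2].

Lemma mB : measurable (B : set (_ * _)).
Proof.
have -> : B = setT `&` [set ts | (((1 - q) * (ts.1 - 1))%:E < (- q * ts.2)%:E)%E].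
  by apply/seteqP; split => x /=; rewrite lte_fin //; case.
apply: measurable_lte => //.
  apply/measurable_EFinP; apply: measurable_funM => //.
  apply: measurable_funB => //; exact: measurable_fst.
apply/measurable_EFinP; apply: measurable_funM => //.
Qed.

Lemma m1_ysection (s : R) : 0 < q -> q < 1 / 2 -> -1 <= s <= 0 ->
  m1 (ysection B s) = ((- q / (1 - q)) * s)%:E.
Proof.
move=> q0 q2 /andP[s1 s0].
have q1 : 0 < 1 - q by lra.
set e := 1 + (- q * s) / (1 - q).
have hx x : (x < e) = ((1 - q) * (x - 1) < - q * s).
  by rewrite /e -ltrBlDl ltr_pdivlMr // mulrC.
have e2 : e <= 2.
  have : - q * s / (1 - q) <= 1 by rewrite ler_pdivrMr //; nra.
  rewrite /e; move: (- q * s / (1 - q)) => u. lra.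
have he : ysection B s `&` `[1, 2] = `[1, e[%classic.
  apply/seteqP; split => x /=.
    rewrite /ysection /B /= inE /= => -[] H; rewrite !in_itv /= => /andP[x1 x2].
    by rewrite x1 hx.
  rewrite !in_itv /= /ysection /B /= => /andP[x1 xe]; split.
    by rewrite inE /= -hx.
  by rewrite x1 /=; apply: ltW; apply: (lt_le_trans xe).
rewrite /m1 /uniform_prob integral_uniform_pdf he.
rewrite (eq_integral (cst 1%E)); last first.
  move=> x; rewrite inE /= in_itv /= => /andP[x1 xe].
  rewrite /uniform_pdf ifT; first by rewrite /= (_ : 2 - 1 = 1) ?invr1 //; lra.
  by rewrite x1 /=; apply: ltW; apply: (lt_le_trans xe).
rewrite integral_cst //= mul1e lebesgue_measure_itv /=.
case: ifPn; rewrite lte_fin => h.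
  by rewrite -EFinB /e; congr (_%:E); field; lra.
have hu : 0 <= - q * s / (1 - q) by apply: divr_ge0; nra.
have : e <= 1 by rewrite leNgt.
rewrite /e => H; congr (_%:E).
have -> : - q / (1 - q) * s = - q * s / (1 - q) by rewrite mulrAC.
by move: (- q * s / (1 - q)) hu H => u; lra.
Qed.

Lemma prodB : 0 < q -> q < 1 / 2 -> (m1 \x m2)%E B = (q / (2 * (1 - q)))%:E.
Proof.
move=> q0 q2.
rewrite (@product_measure_unique _ _ _ _ _ m1 m2 (m1 \x^ m2)%E); last 2 first.
- by move=> A1 A2 mA1 mA2; apply: product_measure2E.
- exact: mB.
transitivity (\int[m2]_s (m1 \o ysection B) s)%E; first by [].
rewrite /m2 integral_uniform //; last first.
  exact: (@measurable_fun_ysection _ _ _ _ _ (uniform_prob (@lt_1_2 R)) B mB).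
rewrite (_ : (\int[lebesgue_measure]_(x in `[(-1)%R, 0%R]) (m1 \o ysection B) x)%E =
   (\int[lebesgue_measure]_(x in `[(-1)%R, 0%R]) ((- q / (1 - q)) * x)%:E)%E); last first.
  apply: eq_integral => s; rewrite inE /= in_itv /= => hs.
  by rewrite m1_ysection.
rewrite ftc_lin -EFinM; congr (_%:E).
rewrite sub0r opprK invr1 mul1r; field; rewrite subr_eq0 gt_eqF //; lra.
Qed.
End S.

Lemma prod_le {R : realType} (A B : set (R * R)) : A `<=` B ->
  ((uniform_prob (@lt_1_2 R) \x uniform_prob (@lt_m1_0 R)) A <=
   (uniform_prob (@lt_1_2 R) \x uniform_prob (@lt_m1_0 R)) B)%E.
Proof.
move=> AB; apply: ge0_le_integral_any => // x _.
apply: uniform_prob_le => y; rewrite /xsection /= !inE; exact: AB.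
Qed.

Lemma p3PD_le {R : realType} (q : R) : 0 < q -> q < 1 / 2 ->
  (p3PD q <= (q / (2 * (1 - q)))%:E)%E.
Proof.
move=> q0 q2; rewrite /p3PD -prodB //; apply: prod_le => ts /=.
exact: three_roots_key.
Qed.

Theorem lemma2p5 (R : realType) :
  (forall q : R, 0 < q -> q < 1 / 2 ->
     (p3PD q <= (q / (2 * (1 - q)))%:E)%E /\ (p3PD q <= (1 / 2)%:E)%E) /\
  (p3PD q @[q --> (0 : R)^'+] --> 0%E).
Proof.
have key (q : R) : 0 < q -> q < 1 / 2 -> (q / (2 * (1 - q)) <= q) /\ (q / (2 * (1 - q)) <= 1 / 2).
  move=> q0 q2; have q1 : 0 < 2 * (1 - q) by lra.
  by split; rewrite ler_pdivrMr //; nra.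
split.
  move=> q q0 q2; have [k1 k2] := key q q0 q2; split; first exact: p3PD_le.
  by apply: (le_trans (p3PD_le q q0 q2)); rewrite lee_fin.
apply: (@squeeze_cvge _ _ _ _ (cst 0%E) _ (fun q => q%:E)).
- near=> q; apply/andP; split; first exact: measure_ge0.
  have q0 : 0 < q by near: q; exact: nbhs_right_gt.
  have q2 : q < 1 / 2 by near: q; apply: nbhs_right_lt; lra.
  apply: (le_trans (p3PD_le q q0 q2)); rewrite lee_fin; exact: (key q q0 q2).1.
- exact: cvg_cst.
- apply: cvg_EFin; first by near=> x.
  exact: cvg_at_right_filter cvg_id.
Unshelve. all: by end_near.
Qed.
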